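(* Let $d_t(n)=PPL_t(n+1)-PPL_t(n)$ for $n\geq 0$. Then $d_t(n)\in\{-1,0,1\}$ for all $n$, and the sequence $(d_t(n))_{n\geq 0}$ is the fixed point (starting with $1$) of the $4$-uniform morphism $\delta$ on the alphabet $\{-1,0,1\}$ given by \[\delta(1)=(1,1,0,-1),\quad \delta(0)=(1,1,-1,-1),\quad \delta(-1)=(1,0,-1,-1);\] that is, $(d_t(4n),d_t(4n+1),d_t(4n+2),d_t(4n+3))=\delta(d_t(n))$ for all $n\geq 0$, and $d_t(0)=1$.
   Context: The Thue-Morse word $t=t[1]t[2]\cdots=abbabaabbaababba\cdots$ is the fixed point starting with $a$ of the morphism $a\mapsto abba,\ b\mapsto baab$. A palindrome is a word $p=p[1]\cdots p[n]$ with $p[i]=p[n-i+1]$ for all $i$. $PPL_t(n)$ is the minimal number of nonempty palindromes whose concatenation equals the prefix of $t$ of length $n$, with $PPL_t(0)=0$. *)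

(* Defs.v *)
From mathcomp Require Import all_boot all_order all_algebra.
Set Implicit Arguments. Unset Strict Implicit. Unset Printing Implicit Defensive.
Import GRing.Theory Num.Theory.

(* Letters: false = a, true = b. *)
Definition tm_morph (x : bool) : seq bool :=
  if x then [:: true; false; false; true]
  else [:: false; true; true; false].

Definition tm_iter (k : nat) : seq bool := iter k (fun w => flatten (map tm_morph w)) [:: false].

(* The i-th letter (0-indexed) of the fixed point starting with a:
   tm_iter (i.+1) has length 4^(i+1) > i and is a prefix of the fixed point. *)
Definition tm (i : nat) : bool := nth false (tm_iter i.+1) i.

(* Prefix of length n of the Thue-Morse word: t[1] ... t[n]. *)
Definition tm_prefix (n : nat) : seq bool := mkseq tm n.

Definition palindrome (w : seq bool) : bool := rev w == w.

Definition pal_factorization (s : seq bool) (ws : seq (seq bool)) : Prop :=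
  flatten ws = s /\ all (fun w => (w != [::]) && palindrome w) ws.

Fixpoint pal_k (k : nat) (s : seq bool) : bool :=
  match k with
  | 0 => s == [::]
  | k'.+1 => [exists j : 'I_(size s), palindrome (take j.+1 s) && pal_k k' (drop j.+1 s)]
  end.

Lemma pal_kP k s : reflect (exists ws, size ws = k /\ pal_factorization s ws) (pal_k k s).
Proof.
elim: k s => [|k IH] s /=.
  apply: (iffP eqP) => [->|[ws [/size0nil -> [<- _]]]]; last by [].
  by exists [::].
apply: (iffP existsP).
  case=> j /andP[pj /IH [ws [sz [fl al]]]].
  exists (take j.+1 s :: ws); split; first by rewrite /= sz.
  split; first by rewrite /= fl cat_take_drop.
  rewrite /= al andbT pj andbT -size_eq0 size_take.
  have hs : 0 < size s by apply: leq_ltn_trans (ltn_ord j).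
  case: ifP => // _; by rewrite -lt0n.
case=> [[|w ws]]; first by case.
case=> [[sz] [/= fl]] /andP[/andP[wn pw] al].
have jlt : (size w).-1 < size s.
  rewrite -fl size_cat; case: w wn {fl pw} => //= x w _; exact: leq_addr.
exists (Ordinal jlt) => /=.
have hj : (size w).-1.+1 = size w by case: w wn {fl pw jlt}.
rewrite hj -fl take_size_cat // drop_size_cat // pw /=.
by apply/IH; exists ws.
Qed.

Lemma pal_k_exists s : exists k, pal_k k s.
Proof.
exists (size s); apply/pal_kP; exists [seq [:: x] | x <- s]; split; first by rewrite size_map.
split; first by elim: s => //= x s ->.
by elim: s => //= x s ->; rewrite andbT /palindrome.
Qed.

Definition PPL (n : nat) : nat := ex_minn (pal_k_exists (tm_prefix n)).

Definition d_t (n : nat) : int := (PPL n.+1)%:Z - (PPL n)%:Z.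

Local Open Scope ring_scope.
Definition delta (x : int) : seq int :=
  if x == 1 then [:: 1; 1; 0; -1]
  else if x == 0 then [:: 1; 1; -1; -1]
  else [:: 1; 0; -1; -1].

(* Main.v *)
Require Import Defs.
From mathcomp Require Import all_boot all_order all_algebra.
Import GRing.Theory Num.Theory.
From mathcomp Require Import zify.


Definition phi (w : seq bool) : seq bool := flatten (map tm_morph w).

Lemma phi_cat a b : phi (a ++ b) = phi a ++ phi b.
Proof. by rewrite /phi map_cat flatten_cat. Qed.

Lemma size_phi w : size (phi w) = 4 * size w.
Proof. elim: w => [|x w IH] //=; rewrite /phi /= size_cat -/(phi w) IH; case: x => /=; lia. Qed.

Lemma nth_phi w q o : o < 4 -> q < size w ->
  nth false (phi w) (4*q+o) = nth false (tm_morph (nth false w q)) o.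
Proof.
move=> ho; elim: w q => [|x w IH] [|q] //= hq.
  rewrite /phi /= nth_cat (_ : 4*0+o = o); last by lia.
  by rewrite (_ : size (tm_morph x) = 4) ?ho //; case: x.
rewrite /phi /= nth_cat (_ : size (tm_morph x) = 4); last by case: x.
rewrite ifF; last by apply/negbTE; rewrite -leqNgt; lia.
rewrite (_ : 4 * q.+1 + o - 4 = 4 * q + o); last by lia.
exact: IH.
Qed.

Lemma tm_iterS k : tm_iter k.+1 = phi (tm_iter k).
Proof. by []. Qed.

Lemma size_tm_iter k : size (tm_iter k) = 4 ^ k.
Proof. elim: k => [|k IH] //; rewrite tm_iterS size_phi IH expnS. by []. Qed.

Lemma stab k i : i < 4 ^ k -> nth false (tm_iter k) i = nth false (tm_iter k.+1) i.
Proof.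
elim: k i => [|k IH] i hi.
  by rewrite expn0 in hi; case: i hi.
have [q [o [ho ei]]] : exists q o, o < 4 /\ i = 4 * q + o.
  by exists (i %/ 4), (i %% 4); split; lia.
subst i.
have hq : q < 4 ^ k by rewrite expnS in hi; move: hi; set X := 4 ^ k; lia.
rewrite (tm_iterS k.+1) (tm_iterS k) !nth_phi //; last by rewrite size_tm_iter.
  by rewrite -IH.
by rewrite size_phi size_tm_iter; move: hq; set X := 4 ^ k; lia.
Qed.

Lemma stab' k k' i : k <= k' -> i < 4 ^ k -> nth false (tm_iter k) i = nth false (tm_iter k') i.
Proof.
move=> hk hi; elim: k' hk => [|k' IH] hk.
  by rewrite leqn0 in hk; move/eqP: hk => ->.
case: (ltngtP k k'.+1) hk => // hk _.
  rewrite IH //; apply: stab; apply: leq_trans hi _; apply: leq_pexp2l => //.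
by rewrite hk.
Qed.

Lemma lt_pow4 i : i < 4 ^ i.
Proof. by apply: ltn_expl. Qed.

Lemma tm_nth k i : i < 4 ^ k -> tm i = nth false (tm_iter k) i.
Proof.
move=> hi; rewrite /tm.
have h1 : i < 4 ^ i.+1 by apply: leq_trans (lt_pow4 i) _; apply: leq_pexp2l.
rewrite (@stab' i.+1 (maxn k i.+1) i) ?leq_maxr //.
by rewrite (@stab' k (maxn k i.+1) i) ?leq_maxl.
Qed.

Lemma tmE q o : o < 4 -> tm (4 * q + o) = nth false (tm_morph (tm q)) o.
Proof.
move=> ho.
have hq : q < 4 ^ q.+1 by apply: leq_trans (lt_pow4 q) _; apply: leq_pexp2l.
have hi : 4 * q + o < 4 ^ q.+2 by rewrite (expnS 4 q.+1); move: hq; set X := 4 ^ q.+1; lia.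
by rewrite (@tm_nth _ _ hi) tm_iterS nth_phi ?size_tm_iter // -(@tm_nth _ _ hq).
Qed.

Lemma tm0 q : tm (4 * q) = tm q.
Proof. by rewrite -[4*q]addn0 tmE //; case: (tm q). Qed.
Lemma tm1 q : tm (4 * q + 1) = ~~ tm q.
Proof. by rewrite tmE //; case: (tm q). Qed.
Lemma tm2 q : tm (4 * q + 2) = ~~ tm q.
Proof. by rewrite tmE //; case: (tm q). Qed.
Lemma tm3 q : tm (4 * q + 3) = tm q.
Proof. by rewrite tmE //; case: (tm q). Qed.

Fixpoint Qf (f n : nat) : nat :=
  match f with
  | 0 => 0
  | f'.+1 =>
    match n %% 4 with
    | 0 => if n %/ 4 is 0 then 0 else Qf f' (n %/ 4)
    | 1 => (Qf f' (n %/ 4)).+1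
    | 2 => (minn (Qf f' (n %/ 4)) (Qf f' (n %/ 4).+1)).+2
    | _ => (Qf f' (n %/ 4).+1).+1
    end
  end.

Lemma Qf_fuel f1 f2 n : n < f1 -> n < f2 -> Qf f1 n = Qf f2 n.
Proof.
elim: f1 f2 n => [|f1 IH] [|f2] n //= h1 h2.
have hm : n %% 4 < 4 by lia.
case E: (n %% 4) => [|[|[|r]]].
- case E2: (n %/ 4) => [|m] //; apply: IH; lia.
- congr S; apply: IH; lia.
- congr S; congr S; congr minn; apply: IH; lia.
- congr S; apply: IH; lia.
Qed.

Definition Q n := Qf n.+1 n.

Lemma Q0 : Q 0 = 0. Proof. by []. Qed.

Lemma Q_4 m : Q (4 * m) = Q m.
Proof.
rewrite /Q [in LHS]/= (_ : (4 * m) %% 4 = 0); last by lia.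
rewrite (_ : (4 * m) %/ 4 = m); last by lia.
case: m => // m; apply: Qf_fuel; lia.
Qed.

Lemma Q_41 m : Q (4 * m + 1) = (Q m).+1.
Proof.
rewrite /Q [in LHS]/= (_ : (4 * m + 1) %% 4 = 1); last by lia.
rewrite (_ : (4 * m + 1) %/ 4 = m); last by lia.
congr S; apply: Qf_fuel; lia.
Qed.

Lemma Q_42 m : Q (4 * m + 2) = (minn (Q m) (Q m.+1)).+2.
Proof.
rewrite /Q [in LHS]/= (_ : (4 * m + 2) %% 4 = 2); last by lia.
rewrite (_ : (4 * m + 2) %/ 4 = m); last by lia.
congr S; congr S; congr minn; apply: Qf_fuel; lia.
Qed.

Lemma Q_43 m : Q (4 * m + 3) = (Q m.+1).+1.
Proof.
rewrite /Q [in LHS]/= (_ : (4 * m + 3) %% 4 = 3); last by lia.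
rewrite (_ : (4 * m + 3) %/ 4 = m); last by lia.
congr S; apply: Qf_fuel; lia.
Qed.

Lemma split4 n : exists m r, r < 4 /\ n = 4 * m + r.
Proof. by exists (n %/ 4), (n %% 4); split; lia. Qed.

Lemma Q_step n : Q n.+1 <= (Q n).+1 /\ Q n <= (Q n.+1).+1.
Proof.
elim/ltn_ind: n => n IH.
have [m [r [hr en]]] := split4 n; subst n.
case: r hr IH => [|[|[|[|r]]]] // _ IH.
- rewrite addn0 (_ : (4 * m).+1 = 4 * m + 1) ?Q_41 ?Q_4; lia.
- rewrite (_ : (4 * m + 1).+1 = 4 * m + 2) ?Q_42 ?Q_41; last by lia.
  have := IH m; case: m IH => [|m] IH h; first by rewrite /Q /=.
  case: (h _) => [|h1 h2]; lia.
- rewrite (_ : (4 * m + 2).+1 = 4 * m + 3) ?Q_43 ?Q_42; last by lia.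
  have := IH m; case: m IH => [|m] IH h; first by rewrite /Q /=.
  case: (h _) => [|h1 h2]; lia.
- rewrite (_ : (4 * m + 3).+1 = 4 * m.+1) ?Q_43 ?Q_4; last by lia.
  lia.
Qed.

Definition Pal a b := forall j, a <= j < b -> tm j = tm (a + b - 1 - j).

Lemma tm_even_ne k : tm (2 * k) != tm (2 * k + 1).
Proof.
have [q [r [hr ek]]] : exists q r, r < 2 /\ k = 2 * q + r by exists (k %/ 2), (k %% 2); split; lia.
subst k; case: r hr => [|[|r]] // _.
- by rewrite (_ : 2 * (2 * q + 0) = 4 * q) ?tm0 ?tm1; [case: (tm q)|lia].
- rewrite (_ : 2 * (2 * q + 1) = 4 * q + 2); last by lia.
  by rewrite (_ : 4 * q + 2 + 1 = 4 * q + 3) ?tm2 ?tm3; [case: (tm q)|lia].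
Qed.

Lemma tm_pal3 p : tm p = tm (p + 2) -> p %% 4 = 2 \/ p %% 4 = 3.
Proof.
have [q [r [hr ep]]] := split4 p; subst p.
case: r hr => [|[|[|[|r]]]] // _ h; try lia.
- move: h; rewrite addn0 tm0 tm2; by case: (tm q).
- move: h; rewrite tm1 (_ : 4 * q + 1 + 2 = 4 * q + 3) ?tm3; [by case: (tm q)|lia].
Qed.

Lemma tm_nopal5 p : tm p = tm (p + 4) -> tm (p + 1) = tm (p + 3) -> False.
Proof.
have [q [r [hr ep]]] := split4 p; subst p.
case: r hr => [|[|[|[|r]]]] // _.
- rewrite addn0 (_ : 4 * q + 4 = 4 * q.+1); last by lia.
  rewrite !tm0 tm1 tm3.
  by case: (tm q); case: (tm q.+1).
- rewrite (_ : 4 * q + 1 + 4 = 4 * q.+1 + 1); last by lia.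
  rewrite (_ : 4 * q + 1 + 1 = 4 * q + 2); last by lia.
  rewrite (_ : 4 * q + 1 + 3 = 4 * q.+1); last by lia.
  rewrite !tm1 tm2 tm0; by case: (tm q); case: (tm q.+1).
- rewrite (_ : 4 * q + 2 + 4 = 4 * q.+1 + 2); last by lia.
  rewrite (_ : 4 * q + 2 + 1 = 4 * q + 3); last by lia.
  rewrite (_ : 4 * q + 2 + 3 = 4 * q.+1 + 1); last by lia.
  rewrite !tm2 tm3 tm1; by case: (tm q); case: (tm q.+1).
- rewrite (_ : 4 * q + 3 + 4 = 4 * q.+1 + 3); last by lia.
  rewrite (_ : 4 * q + 3 + 1 = 4 * q.+1); last by lia.
  rewrite (_ : 4 * q + 3 + 3 = 4 * q.+1 + 2); last by lia.
  rewrite !tm3 tm0 tm2; by case: (tm q); case: (tm q.+1).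
Qed.

Lemma pal_shrink a b : Pal a b -> Pal a.+1 b.-1.
Proof.
move=> h j hj; rewrite (_ : a.+1 + b.-1 - 1 - j = a + b - 1 - j); last by lia.
apply: h; lia.
Qed.

Lemma pal_desub a b : a < b -> Pal a b -> (a + b) %% 4 = 0 ->
  Pal (a %/ 4) ((b + 3) %/ 4).
Proof.
move=> hab h hm.
set A := a %/ 4; set B := (b + 3) %/ 4.
have [e [he ea]] : exists e, e < 4 /\ a = 4 * A + e by exists (a %% 4); split; lia.
have eb : b + e = 4 * B by lia.
move=> q hq.
set j := maxn (4 * q) a.
have hj : a <= j < b by lia.
have := h j hj.
have [o [ho ej]] : exists o, o < 4 /\ j = 4 * q + o by exists (j - 4 * q); split; lia.
rewrite (_ : a + b - 1 - j = 4 * (A + B - 1 - q) + (3 - o)); last by lia.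
rewrite ej !tmE //; last by lia.
case: o ho {ej} => [|[|[|[|o]]]] // _ /=; rewrite ?subn0;
  by case: (tm q); case: (tm (A + B - 1 - q)).
Qed.

Lemma lemmaA b : forall a, a < b -> Pal a b -> Q b <= (Q a).+1.
Proof.
elim/ltn_ind: b => b IH a hab hp.
have QS := Q_step.
case: (boolP (odd (b - a))) => hodd.
-
  case: (ltngtP (b - a) 3) => hl.
  +
    have e1 : b - a = 1 by move: hodd hl; case: (b - a) => [|[|[|k]]].
    have -> : b = a.+1 by lia.
    by case: (QS a).
  +
    have [h eh] : exists h, b - a = 2 * h + 1 by exists ((b - a)./2); move: hodd; lia.
    have h2 : 2 <= h by lia.
    set p := a + h - 2.
    apply: False_ind; apply: (@tm_nopal5 p).
    * rewrite (hp p); [congr tm|]; lia.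
    * rewrite (hp (p + 1)); [congr tm|]; lia.
  +
    have h3 : tm a = tm (a + 2) by rewrite (hp a); [congr tm|]; lia.
    have [q [r [hr ea]]] := split4 a.
    case: (@tm_pal3 _ h3) => hm.
    * have -> : a = 4 * q + 2 by lia.
      have -> : b = 4 * q.+1 + 1 by lia.
      rewrite Q_42 Q_41; case: (QS q); lia.
    * have -> : a = 4 * q + 3 by lia.
      have -> : b = 4 * q.+1 + 2 by lia.
      rewrite Q_43 Q_42; lia.
-
  have [h eh] : exists h, b - a = 2 * h by exists ((b - a)./2); move: hodd; lia.
  have h1 : 1 <= h by lia.
  have hc : tm (a + h - 1) = tm (a + h) by rewrite (hp (a + h - 1)); [congr tm|]; lia.
  have hev : ~~ odd (a + h).
    apply/negP => ho.
    have [k ek] : exists k, a + h - 1 = 2 * k by exists ((a + h - 1)./2); move: ho; lia.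
    move: (tm_even_ne k); rewrite (_ : 2 * k + 1 = a + h); last by lia.
    by rewrite -ek hc eqxx.
  have hm : (a + b) %% 4 = 0 by move: hev; lia.
  have hP := @pal_desub _ _ hab hp hm.
  set A := a %/ 4 in hP; set B := (b + 3) %/ 4 in hP.
  have [e [he ea]] : exists e, e < 4 /\ a = 4 * A + e by exists (a %% 4); split; lia.
  have eb : b + e = 4 * B by lia.
  have hAB : A < B by lia.
  have IH1 : Q B <= (Q A).+1 by apply: IH => //; lia.
  case: e he ea eb => [|[|[|[|e]]]] // _ ea eb.
  + rewrite ea addn0 (_ : b = 4 * B); last by lia.
    by rewrite !Q_4.
  + have [B' eB] : exists B', B = B'.+1 by exists B.-1; lia.
    rewrite ea (_ : b = 4 * B' + 3); last by lia.
    rewrite Q_41 Q_43 -eB; lia.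
  + have [B' eB] : exists B', B = B'.+1 by exists B.-1; lia.
    have IH2 : Q B' <= (Q A.+1).+1.
      case: (ltngtP A.+1 B') => hh; last by rewrite hh; lia.
      * apply: IH; [lia|exact hh|].
        have := @pal_shrink _ _ hP; by rewrite eB.
      * lia.
    rewrite ea (_ : b = 4 * B' + 2); last by lia.
    rewrite !Q_42 -eB; lia.
  + have [B' eB] : exists B', B = B'.+1 by exists B.-1; lia.
    have IH2 : Q B' <= (Q A.+1).+1.
      case: (ltngtP A.+1 B') => hh; last by rewrite hh; lia.
      * apply: IH; [lia|exact hh|].
        have := @pal_shrink _ _ hP; by rewrite eB.
      * lia.
    rewrite ea (_ : b = 4 * B' + 1); last by lia.
    rewrite Q_41 Q_43; lia.
Qed.

Definition seg i n := mkseq (fun j => tm (i + j)) (n - i).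

Lemma take_seg i n j : j <= n - i -> take j (seg i n) = seg i (i + j).
Proof.
move=> hj; apply: (@eq_from_nth _ false).
  rewrite size_takel !size_mkseq; lia.
move=> k; rewrite size_takel ?size_mkseq // => hk.
rewrite nth_take; last by lia.
rewrite !nth_mkseq //; lia.
Qed.

Lemma drop_seg i n j : j <= n - i -> drop j (seg i n) = seg (i + j) n.
Proof.
move=> hj; apply: (@eq_from_nth _ false).
  rewrite size_drop !size_mkseq; lia.
move=> k; rewrite size_drop size_mkseq => hk.
rewrite nth_drop !nth_mkseq; [by rewrite addnA|lia|lia].
Qed.

Lemma pal_seg a b : a <= b -> palindrome (seg a b) -> Pal a b.
Proof.
move=> hab /eqP hr j hj.
have := congr1 (fun s => nth false s (j - a)) hr => /=.
rewrite nth_rev ?size_mkseq; last by lia.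
rewrite !nth_mkseq; [|lia|lia].
rewrite (_ : a + (j - a) = j); last by lia.
move=> <-; congr tm; lia.
Qed.

Lemma LB k : forall i n, i <= n -> pal_k k (seg i n) -> Q n <= Q i + k.
Proof.
elim: k => [|k IH] i n hin /=.
  move/eqP/(congr1 size); rewrite size_mkseq /= => h.
  have -> : n = i by lia.
  by rewrite addn0.
move/existsP => [[j hj] /andP [hp hk]] /=.
have hj' : j < n - i by move: (hj); rewrite size_mkseq.
simpl in hp, hk.
rewrite take_seg in hp; last by lia.
rewrite drop_seg in hk; last by lia.
have := IH _ _ _ hk; move=> /(_ ltac:(lia)) h1.
have := @lemmaA (i + j.+1) i ltac:(lia) (@pal_seg i (i + j.+1) ltac:(lia) hp).
lia.
Qed.

Lemma S1 k s x : pal_k k s -> pal_k k.+1 (rcons s x).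
Proof.
move/pal_kP => [ws [sz [fl al]]]; apply/pal_kP.
exists (rcons ws [:: x]); split; first by rewrite size_rcons sz.
split; first by rewrite flatten_rcons fl cats1.
by rewrite all_rcons al andbT /palindrome /rev /=.
Qed.

Lemma S2 k s x : pal_k k (rcons s x) -> exists2 k', k' <= k.+1 & pal_k k' s.
Proof.
move/pal_kP => [ws [sz [fl al]]].
case/lastP: ws sz fl al => [|ws w] sz fl al.
  by move: fl => /= /(congr1 size); rewrite size_rcons.
move: al; rewrite all_rcons => /andP [/andP [wn pw] al].
rewrite size_rcons in sz.
case/lastP: w wn pw fl => [|w y] // _ pw fl.
move: fl; rewrite flatten_rcons -rcons_cat => /rcons_inj [fl ey]; subst y.
case: w pw fl => [|z v] pw fl.
  exists (size ws); first by lia.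
  apply/pal_kP; exists ws; split => //; split => //; by rewrite -fl cats0.
move: pw; rewrite /palindrome rev_cons rev_rcons /= => /eqP [ezx].
subst z => /rcons_inj [hv].
case: v hv fl => [|y v] hv fl.
  exists (size ws).+1; first by lia.
  apply/pal_kP; exists (rcons ws [:: x]); split; first by rewrite size_rcons.
  split; first by rewrite flatten_rcons fl.
  by rewrite all_rcons al andbT /palindrome /rev /=.
exists (size ws).+2; first by lia.
apply/pal_kP; exists (ws ++ [:: [:: x]; y :: v]); split; first by rewrite size_cat addn2.
split; first by rewrite flatten_cat -fl /= cats0.
rewrite all_cat al /= /palindrome hv eqxx. by rewrite /rev /= eqxx.
Qed.

Lemma phi_cons x w : phi (x :: w) = tm_morph x ++ phi w.
Proof. by []. Qed.

Lemma rev_phi w : rev (phi w) = phi (rev w).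
Proof.
elim: w => [|x w IH] //.
rewrite phi_cons rev_cat IH rev_cons -cats1 phi_cat /=.
by rewrite /phi /= cats0; case: x.
Qed.

Lemma flatten_phi ws : flatten (map phi ws) = phi (flatten ws).
Proof. by elim: ws => [|w ws IH] //=; rewrite phi_cat IH. Qed.

Lemma S3 k s : pal_k k s -> pal_k k (phi s).
Proof.
move/pal_kP => [ws [sz [fl al]]]; apply/pal_kP.
exists (map phi ws); split; first by rewrite size_map.
split; first by rewrite flatten_phi fl.
rewrite all_map; apply/allP => w hw; move/allP: al => /(_ w hw) /andP [wn pw].
apply/andP; split.
  by case: w wn {hw pw} => [|x w] //= _; rewrite phi_cons; case: x.
by rewrite /palindrome rev_phi (eqP pw).
Qed.

Lemma prefS n : tm_prefix n.+1 = rcons (tm_prefix n) (tm n).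
Proof. exact: mkseqS. Qed.

Lemma pref4 m : tm_prefix (4 * m) = phi (tm_prefix m).
Proof.
apply: (@eq_from_nth _ false); first by rewrite size_phi !size_mkseq.
move=> i; rewrite size_mkseq => hi.
have [q [o [ho ei]]] := split4 i; subst i.
rewrite nth_phi ?size_mkseq; [|done|lia].
by rewrite !nth_mkseq ?tmE //; lia.
Qed.

Lemma UB n : exists2 k, k <= Q n & pal_k k (tm_prefix n).
Proof.
elim/ltn_ind: n => n IH.
have [m [r [hr en]]] := split4 n; subst n.
case: r hr IH => [|[|[|[|r]]]] // _ IH.
- case: m IH => [|m] IH; first by exists 0.
  have [k hk pk] := IH m.+1 ltac:(lia).
  exists k; first by rewrite addn0 Q_4.
  by rewrite addn0 pref4; apply: S3.
- have [k hk pk] := IH (4 * m) ltac:(lia).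
  exists k.+1; first by rewrite Q_41 -(Q_4 m).
  by rewrite addn1 prefS; apply: S1.
- rewrite Q_42.
  case: (leqP (Q m) (Q m.+1)) => hq.
    have [k hk pk] := IH (4 * m + 1) ltac:(lia).
    exists k.+1; first by move: hk; rewrite Q_41; lia.
    by rewrite (_ : 4 * m + 2 = (4 * m + 1).+1) ?prefS; [apply: S1|lia].
  have [k hk pk] := IH m.+1 ltac:(lia).
  have := @S3 _ _ pk; rewrite -pref4 (_ : 4 * m.+1 = (4 * m + 2).+2); last by lia.
  rewrite !prefS => /S2 [k1 hk1] /S2 [k2 hk2 pk2].
  exists k2 => //; lia.
- have [k hk pk] := IH m.+1 ltac:(lia).
  have := @S3 _ _ pk; rewrite -pref4 (_ : 4 * m.+1 = (4 * m + 3).+1); last by lia.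
  rewrite !prefS => /S2 [k1 hk1 pk1].
  exists k1 => //; rewrite Q_43; lia.
Qed.

Lemma PPLQ n : PPL n = Q n.
Proof.
rewrite /PPL; case: ex_minnP => k hk hmin.
apply/eqP; rewrite eqn_leq; apply/andP; split.
  by have [k' hk' pk'] := UB n; apply: leq_trans (hmin _ pk') hk'.
have := @LB k 0 n (leq0n n); rewrite /seg subn0 add0n.
by move/(_ hk).
Qed.
Local Open Scope ring_scope.

Lemma dtQ n : d_t n = (Q n.+1)%:Z - (Q n)%:Z.
Proof. by rewrite /d_t !PPLQ. Qed.

Theorem corollary13 :
  (forall n : nat, d_t n \in [:: -1; 0; 1]) /\
  d_t 0 = 1 /\
  (forall n : nat,
     [:: d_t (4 * n); d_t (4 * n + 1); d_t (4 * n + 2); d_t (4 * n + 3)] = delta (d_t n)).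
Proof.
split; [|split].
- move=> n; rewrite dtQ; have [h1 h2] := Q_step n.
  case: (ltngtP (Q n.+1) (Q n)) => h.
  + by rewrite (_ : _ - _ = -1); [|lia].
  + by rewrite (_ : _ - _ = 1); [|lia].
  + by rewrite h subrr.
- by rewrite dtQ.
- move=> n; rewrite !dtQ.
  rewrite (_ : (4 * n).+1 = 4 * n + 1)%N; last by lia.
  rewrite (_ : (4 * n + 1).+1 = 4 * n + 2)%N; last by lia.
  rewrite (_ : (4 * n + 2).+1 = 4 * n + 3)%N; last by lia.
  rewrite (_ : (4 * n + 3).+1 = 4 * n.+1)%N; last by lia.
  rewrite Q_4 Q_41 Q_42 Q_43 Q_4.
  have [h1 h2] := Q_step n.
  case: (ltngtP (Q n.+1) (Q n)) => h.
  + have hd : (Q n.+1)%:Z - (Q n)%:Z = -1 by lia.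
    rewrite hd /delta /=; congr [:: _; _; _; _]; lia.
  + have hd : (Q n.+1)%:Z - (Q n)%:Z = 1 by lia.
    rewrite hd /delta /=; congr [:: _; _; _; _]; lia.
  + have hd : (Q n.+1)%:Z - (Q n)%:Z = 0 by lia.
    rewrite hd /delta /=; congr [:: _; _; _; _]; lia.
Qed.
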